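(* Let $R$ be a ring, $B\in R^{m\times k}$, $B'\in R^{m\times(n-k)}$, and $\phi={}_B\phi_{B'}$. Then \[ \mathrm{Defect}(\mathcal B(\phi,-))\;\cong\;\frac{R^{1\times k}}{\{\,yB\mid y\in R^{1\times m},\ yB'=0\,\}} \] as left $R$-modules.
   Context: Let $R$ be a ring; $R\text{-}\mathbf{mod}$ denotes finitely presented left $R$-modules. $R\text{-}\mathbf{mod}\text{-}\mathbf{mod}$ is the category of finitely presented additive functors $R\text{-}\mathbf{mod}\to\mathbf{Ab}$. If $\mathcal G\in R\text{-}\mathbf{mod}\text{-}\mathbf{mod}$ has a presentation $\operatorname{Hom}(N',-)\xrightarrow{\operatorname{Hom}(\alpha,-)}\operatorname{Hom}(N,-)\to\mathcal G\to0$ with $\alpha:N\to N'$ in $R\text{-}\mathbf{mod}$, its (contravariant) defect is $\mathrm{Defect}(\mathcal G):=\ker(\alpha)$ computed in the category of left $R$-modules; this is well defined up to isomorphism (it is the value at $\mathcal G$ of the unique exact functor $R\text{-}\mathbf{mod}\text{-}\mathbf{mod}\to(R\text{-}\mathbf{Mod})^{\mathrm{op}}$ sending the forgetful functor $\mathcal F=\operatorname{Hom}(R,-)$ to $R^{1\times1}$ and $r:\mathcal F\to\mathcal F$ to right multiplication by $r$). A pp formula ${}_B\phi_{B'}$ is given by $B\in R^{m\times k}$, $B'\in R^{m\times(n-k)}$, and $\mathcal B(\phi,M)=\{\omega\in M^{k\times1}\mid\exists\,\omega'\in M^{(n-k)\times1}: B\omega+B'\omega'=0\}$; $\mathcal B(\phi,-)$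 (restricted to $R\text{-}\mathbf{mod}$) lies in $R\text{-}\mathbf{mod}\text{-}\mathbf{mod}$. *)

(* Defs.v *)
From HB Require Import structures.
From mathcomp Require Import all_boot all_order all_algebra.
Set Implicit Arguments. Unset Strict Implicit. Unset Printing Implicit Defensive.
Import GRing.Theory.
Local Open Scope ring_scope.

(* Left R-modules are [lmodType R]; R^{1 x k} is ['rV[R]_k] with left scaling. *)

Definition mxact (R : pzRingType) (M : lmodType R) (m k : nat)
  (B : 'M[R]_(m, k)) (w : 'cV[M]_k) : 'cV[M]_m :=
  \col_(i < m) \sum_(j < k) B i j *: w j 0.

(* The pp-definable subgroup  B(phi, M)  for phi = _B phi_B' (with l = n - k). *)
Definition pp_set (R : pzRingType) (m k l : nat)
  (B : 'M[R]_(m, k)) (B' : 'M[R]_(m, l)) (M : lmodType R) (w : 'cV[M]_k) : Prop :=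
  exists w' : 'cV[M]_l, mxact B w + mxact B' w' = 0.

Definition finpres (R : pzRingType) (M : lmodType R) : Prop :=
  exists (n : nat) (v : 'I_n -> M),
    (forall x : M, exists c : 'rV[R]_n, x = \sum_(i < n) c 0 i *: v i) /\
    exists (p : nat) (G : 'M[R]_(p, n)),
      forall c : 'rV[R]_n,
        (\sum_(i < n) c 0 i *: v i = 0) <-> exists d : 'rV[R]_p, c = d *m G.

(* [pi] together with [alpha] is a projective presentation
     Hom(N',-) --Hom(alpha,-)--> Hom(N,-) --pi--> B(phi,-) --> 0
   in R-mod-mod: pi is a natural transformation (on finitely presented M)
   Hom(N,-) -> B(phi,-), each component is onto B(phi,M), and its kernel is
   the image of precomposition with alpha. *)
Definition is_pp_presentation (R : pzRingType) (m k l : nat)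
  (B : 'M[R]_(m, k)) (B' : 'M[R]_(m, l)) (N N' : lmodType R)
  (alpha : {linear N -> N'})
  (pi : forall M : lmodType R, {linear N -> M} -> 'cV[M]_k) : Prop :=
  (forall (M : lmodType R), finpres M ->
     forall h : {linear N -> M}, pp_set B B' (pi M h)) /\
  (forall (M M' : lmodType R), finpres M -> finpres M' ->
     forall (g : {linear M -> M'}) (h : {linear N -> M}) (h' : {linear N -> M'}),
       (forall x, h' x = g (h x)) -> pi M' h' = map_mx g (pi M h)) /\
  (forall (M : lmodType R), finpres M ->
     forall w : 'cV[M]_k, pp_set B B' w -> exists h : {linear N -> M}, pi M h = w) /\
  (forall (M : lmodType R), finpres M ->
     forall h : {linear N -> M},
       pi M h = 0 <-> exists f : {linear N' -> M}, forall x, h x = f (alpha x)).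

(* Main.v *)
Require Import Defs.
From HB Require Import structures.
From mathcomp Require Import all_boot all_order all_algebra.
From Stdlib Require Import ClassicalEpsilon ProofIrrelevance FunctionalExtensionality PropExtensionality.
Set Implicit Arguments. Unset Strict Implicit. Unset Printing Implicit Defensive.
Import GRing.Theory.
Local Open Scope ring_scope.

Lemma cid_ext (T : Type) (P1 P2 : T -> Prop) (h1 : exists x, P1 x) (h2 : exists x, P2 x) :
  P1 = P2 -> proj1_sig (constructive_indefinite_description _ h1) =
             proj1_sig (constructive_indefinite_description _ h2).
Proof. move=> E; subst P2; by rewrite (proof_irrelevance _ h1 h2). Qed.

Section Quot.
Variables (R : pzRingType) (V : lmodType R) (p : nat) (u : 'I_p -> V).

Definition inS (x : V) : Prop := exists c : 'rV[R]_p, x = \sum_i c 0 i *: u i.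

Lemma inS0 : inS 0.
Proof. exists 0; rewrite big1 // => i _; by rewrite mxE scale0r. Qed.

Lemma inSD x y : inS x -> inS y -> inS (x + y).
Proof.
move=> [c ->] [d ->]; exists (c + d); rewrite -big_split /=.
by apply: eq_bigr => i _; rewrite mxE scalerDl.
Qed.

Lemma inSZ a x : inS x -> inS (a *: x).
Proof.
move=> [c ->]; exists (a *: c); rewrite scaler_sumr.
by apply: eq_bigr => i _; rewrite mxE scalerA.
Qed.

Lemma inSN x : inS x -> inS (- x).
Proof. by move=> h; rewrite -scaleN1r; apply: inSZ. Qed.

Lemma inSB x y : inS x -> inS y -> inS (x - y).
Proof. by move=> hx hy; apply: inSD => //; apply: inSN. Qed.

Lemma inSsym x y : inS (x - y) -> inS (y - x).
Proof. by move=> h; rewrite -opprB; apply: inSN. Qed.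

Lemma canon_ex (v : V) : exists w, inS (w - v).
Proof. by exists v; rewrite subrr; apply: inS0. Qed.

Definition canon (v : V) : V :=
  proj1_sig (constructive_indefinite_description _ (canon_ex v)).

Lemma canonP v : inS (canon v - v).
Proof. exact: (proj2_sig (constructive_indefinite_description _ (canon_ex v))). Qed.

Lemma canon_eq v w : inS (v - w) -> canon v = canon w.
Proof.
move=> h; apply: cid_ext; apply: functional_extensionality => x.
apply: propositional_extensionality; split => hx.
  have -> : x - w = (x - v) + (v - w) by rewrite addrA subrK.
  exact: inSD.
have -> : x - v = (x - w) - (v - w) by rewrite opprB addrA subrK.
exact: inSB.
Qed.

Lemma canonK v : canon (canon v) = canon v.
Proof. exact/canon_eq/canonP. Qed.

Lemma canon_inS v w : canon v = canon w -> inS (v - w).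
Proof.
move=> e.
have -> : v - w = (canon w - w) - (canon v - v) by rewrite e opprB [(_ - w) + _]addrC addrA subrK.
by apply: inSB; apply: canonP.
Qed.

Definition Q := {x : V | canon x == x}.
HB.instance Definition _ := [isSub of Q for @sval V _].
HB.instance Definition _ := [Choice of Q by <:].

Definition mkQ (v : V) : Q := exist _ (canon v) (introT eqP (canonK v)).

Lemma mkQ_cong v w : inS (v - w) -> mkQ v = mkQ w.
Proof. by move=> h; apply: val_inj => /=; apply: canon_eq. Qed.

Lemma mkQ_inS v w : mkQ v = mkQ w -> inS (v - w).
Proof. by move=> /(congr1 val) /= /canon_inS. Qed.

Lemma valQK (a : Q) : mkQ (val a) = a.
Proof. by apply: val_inj => /=; apply/eqP; case: a. Qed.

Lemma mkQ_valDl v w : mkQ (val (mkQ v) + w) = mkQ (v + w).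
Proof. by apply: mkQ_cong => /=; rewrite opprD addrACA subrr addr0; apply: canonP. Qed.

Lemma mkQ_valDr v w : mkQ (w + val (mkQ v)) = mkQ (w + v).
Proof. by rewrite addrC mkQ_valDl addrC. Qed.

Lemma mkQ_valN v : mkQ (- val (mkQ v)) = mkQ (- v).
Proof. by apply: mkQ_cong => /=; rewrite opprK addrC; apply: inSsym; apply: canonP. Qed.

Lemma mkQ_valZ a v : mkQ (a *: val (mkQ v)) = mkQ (a *: v).
Proof. by apply: mkQ_cong => /=; rewrite -scalerBr; apply: inSZ; apply: canonP. Qed.

Definition zeroQ : Q := mkQ 0.
Definition addQ (a b : Q) : Q := mkQ (val a + val b).
Definition oppQ (a : Q) : Q := mkQ (- val a).
Definition scaleQ (r : R) (a : Q) : Q := mkQ (r *: val a).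

Lemma addQA : associative addQ.
Proof.
move=> a b c; rewrite /addQ mkQ_valDl mkQ_valDr; by rewrite addrA.
Qed.

Lemma addQC : commutative addQ.
Proof. by move=> a b; rewrite /addQ addrC. Qed.

Lemma add0Q : left_id zeroQ addQ.
Proof. by move=> a; rewrite /addQ /zeroQ mkQ_valDl add0r valQK. Qed.

Lemma addNQ : left_inverse zeroQ oppQ addQ.
Proof. by move=> a; rewrite /addQ /oppQ mkQ_valDl addNr. Qed.

HB.instance Definition _ := GRing.isZmodule.Build Q addQA addQC add0Q addNQ.

Lemma addQE (a b : Q) : a + b = mkQ (val a + val b). Proof. by []. Qed.
Lemma zeroQE : (0 : Q) = mkQ 0. Proof. by []. Qed.

Lemma scaleQA a b v : scaleQ a (scaleQ b v) = scaleQ (a * b) v.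
Proof. by rewrite /scaleQ mkQ_valZ scalerA. Qed.

Lemma scale1Q : left_id 1 scaleQ.
Proof. by move=> v; rewrite /scaleQ scale1r valQK. Qed.

Lemma scaleQDr : right_distributive scaleQ +%R.
Proof.
move=> a v w; rewrite /scaleQ !addQE mkQ_valZ mkQ_valDl mkQ_valDr.
by rewrite scalerDr.
Qed.

Lemma scaleQDl v : {morph scaleQ^~ v : a b / a + b}.
Proof.
move=> a b; rewrite /scaleQ !addQE mkQ_valDl mkQ_valDr.
by rewrite scalerDl.
Qed.

HB.instance Definition _ := GRing.Zmodule_isLmodule.Build R Q scaleQA scale1Q scaleQDr scaleQDl.

Lemma mkQ_is_linear : linear mkQ.
Proof.
move=> a x y; rewrite addQE.
have -> : a *: mkQ x = mkQ (a *: val (mkQ x)) by [].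
rewrite mkQ_valDl mkQ_valDr; apply: mkQ_cong.
rewrite opprD addrACA subrr addr0 -scalerBr; apply: inSZ; apply: inSsym; exact: canonP.
Qed.

HB.instance Definition _ := GRing.isLinear.Build R V Q *:%R mkQ mkQ_is_linear.

Lemma mkQ0 x : mkQ x = 0 <-> inS x.
Proof.
rewrite zeroQE; split => [/mkQ_inS|h]; first by rewrite subr0.
by apply: mkQ_cong; rewrite subr0.
Qed.

Lemma mkQ_surj (a : Q) : exists v, mkQ v = a.
Proof. by exists (val a); apply: valQK. Qed.

End Quot.

Section Comb.
Variables (R : pzRingType) (V : lmodType R) (n : nat) (v : 'I_n -> V).
Definition sumv (x : 'rV[R]_n) : V := \sum_j x 0 j *: v j.
Lemma sumvD x y : sumv (x + y) = sumv x + sumv y.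
Proof. by rewrite /sumv -big_split; apply: eq_bigr => j _; rewrite mxE scalerDl. Qed.
Lemma sumvB x y : sumv (x - y) = sumv x - sumv y.
Proof. by rewrite /sumv -sumrB; apply: eq_bigr => j _; rewrite !mxE scalerBl. Qed.
Lemma sumv_mul p (e : 'rV[R]_p) (A : 'M[R]_(p, n)) :
  sumv (e *m A) = \sum_i e 0 i *: sumv (row i A).
Proof.
rewrite /sumv; symmetry; under eq_bigr do rewrite scaler_sumr.
rewrite exchange_big /=; apply: eq_bigr => j _.
rewrite !mxE scaler_suml; apply: eq_bigr => i _; by rewrite mxE scalerA.
Qed.
Lemma sumv_is_linear : linear sumv.
Proof.
move=> a x y; rewrite sumvD; congr (_ + _); rewrite /sumv scaler_sumr.
by apply: eq_bigr => j _; rewrite !mxE scalerA.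
Qed.
HB.instance Definition _ := GRing.isLinear.Build R 'rV[R]_n V *:%R sumv sumv_is_linear.
Lemma sumv_delta i : sumv 'e_i = v i.
Proof.
rewrite /sumv (bigD1 i) //= big1 ?addr0 => [|j /negPf nj]; rewrite mxE.
  by rewrite !eqxx scale1r.
by rewrite nj andbF scale0r.
Qed.
End Comb.

Lemma mxactE (R : pzRingType) (M : lmodType R) (m k : nat)
  (B : 'M[R]_(m, k)) (w : 'cV[M]_k) i :
  mxact B w i 0 = sumv (fun j => w j 0) (row i B).
Proof. by rewrite mxE /sumv; apply: eq_bigr => j _; rewrite mxE. Qed.

Lemma row_mx_v0 (R : pzRingType) k l (v : 'rV[R]_k) :
  row_mx v (0 : 'rV[R]_l) = \sum_j v 0 j *: 'e_(lshift l j).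
Proof.
rewrite {1}[row_mx v 0]row_sum_delta big_split_ord /=.
rewrite [X in _ + X]big1 ?addr0 => [|j _]; last by rewrite row_mxEr mxE scale0r.
by apply: eq_bigr => j _; rewrite row_mxEl.
Qed.

Lemma row_rowmx (R : pzRingType) m k l (B : 'M[R]_(m, k)) (B' : 'M[R]_(m, l)) i :
  row i (row_mx B B') = \sum_j B i j *: 'e_(lshift l j) + \sum_j B' i j *: 'e_(rshift k j).
Proof.
rewrite {1}[row i _]row_sum_delta big_split_ord /=.
by congr (_ + _); apply: eq_bigr => j _; rewrite mxE ?row_mxEl ?row_mxEr.
Qed.




Lemma finpresQ (R : pzRingType) (V : lmodType R) p (u : 'I_p -> V) :
  finpres V -> finpres (Q u).
Proof.
move=> [n [v [gen [p' [G rel]]]]].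
pose a i := proj1_sig (constructive_indefinite_description _ (gen (u i))).
have ha i : u i = \sum_j a i 0 j *: v j.
  exact: (proj2_sig (constructive_indefinite_description _ (gen (u i)))).
pose A := \matrix_(i < p, j < n) a i 0 j.
have comb (e : 'rV[R]_p) : \sum_i e 0 i *: u i = sumv v (e *m A).
  rewrite sumv_mul; apply: eq_bigr => i _; rewrite ha /sumv; congr (_ *: _).
  by apply: eq_bigr => j _; rewrite !mxE.
have E (c : 'rV[R]_n) : \sum_i c 0 i *: mkQ u (v i) = mkQ u (sumv v c).
  by rewrite linear_sum; apply: eq_bigr => i _; rewrite linearZ.
exists n, (fun i => mkQ u (v i)); split.
  move=> x; have [y <-] := mkQ_surj x; have [c ->] := gen y; exists c.
  by rewrite E.
exists (p' + p)%N, (col_mx G A) => c.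
rewrite E mkQ0; split.
  move=> [e he].
  have : sumv v (c - e *m A) = 0 by rewrite sumvB -comb -he subrr.
  move/rel => [d' hd]; exists (row_mx d' e).
  by rewrite mul_row_col -hd subrK.
move=> [d ->]; rewrite -[d]hsubmxK mul_row_col; exists (rsubmx d).
rewrite comb sumvD.
have -> : sumv v (lsubmx d *m G) = 0 by apply/rel; exists (lsubmx d).
by rewrite add0r.
Qed.

Lemma finpres_row (R : pzRingType) (n : nat) : finpres 'rV[R]_n.
Proof.
exists n, (fun j => 'e_j); split.
  by move=> x; exists x; apply: row_sum_delta.
exists 0%N, 0 => c; rewrite -row_sum_delta; split.
  by move=> ->; exists 0; rewrite mul0mx.
by move=> [d ->]; rewrite thinmx0 mul0mx.
Qed.

Theorem mainTheorem3 (R : pzRingType) (m k l : nat)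
  (B : 'M[R]_(m, k)) (B' : 'M[R]_(m, l))
  (N N' : lmodType R) (alpha : {linear N -> N'})
  (pi : forall M : lmodType R, {linear N -> M} -> 'cV[M]_k) :
  finpres N -> finpres N' -> is_pp_presentation B B' alpha pi ->
  exists g : {linear 'rV[R]_k -> N},
    (forall x : N, alpha x = 0 <-> exists v : 'rV[R]_k, g v = x) /\
    (forall v : 'rV[R]_k,
       g v = 0 <-> exists y : 'rV[R]_m, y *m B' = 0 /\ v = y *m B).
Proof.
move=> fN fN' [Hl [Hnat [Hsurj Hex]]].
pose idN : {linear N -> N} := idfun.
pose w0 := pi N idN.
have nat0 (M : lmodType R) (fM : finpres M) (h : {linear N -> M}) :
    pi M h = map_mx h w0 := Hnat N M fN fM h idN h (fun x => erefl).
pose w : 'I_k -> N := fun j => w0 j 0.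
exists (sumv w : {linear 'rV[R]_k -> N}); split.
  move=> x; split.
    move=> ax.
    pose q := (mkQ w : {linear N -> Q w}).
    have fQ : finpres (Q w) := finpresQ w fN.
    have pq : pi _ q = 0.
      rewrite nat0 //; apply/matrixP => i j; rewrite (ord1 j) !mxE.
      by apply/mkQ0; exists 'e_i; rewrite -/(sumv _ _) sumv_delta.
    have [f hf] := (proj1 (Hex _ fQ q) pq).
    have : q x = 0 by rewrite hf ax linear0.
    by move/mkQ0 => [c hc]; exists c.
  move=> [v <-]; rewrite /sumv linear_sum big1 // => j _.
  have pa : pi N' alpha = 0.
    by apply/(Hex _ fN'); exists (idfun : {linear N' -> N'}).
  move: pa; rewrite nat0 // => /matrixP /(_ j 0); rewrite !mxE => E.
  by rewrite linearZ /= /w E scaler0.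
move=> v; split; last first.
  move=> [y [hy ->]].
  have [w' hw] := Hl N fN idN.
  rewrite [LHS](sumv_mul w y B).
  have -> : \sum_i y 0 i *: sumv w (row i B) =
            - \sum_i y 0 i *: sumv (fun j => w' j 0) (row i B').
    rewrite -sumrN; apply: eq_bigr => i _; rewrite -scalerN; congr (_ *: _).
    move/matrixP: hw => /(_ i 0); rewrite !mxE => /eqP.
    rewrite addr_eq0 => /eqP E.
    rewrite /sumv; move: E; rewrite /sumv => E.
    have -> : \sum_j row i B 0 j *: w j = \sum_j B i j *: w0 j 0
      by apply: eq_bigr => j _; rewrite mxE.
    by rewrite E; congr (- _); apply: eq_bigr => j _; rewrite mxE.
  by rewrite -sumv_mul hy /sumv big1 ?oppr0 // => j _; rewrite mxE scale0r.
move=> gv.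
pose u := fun i : 'I_m => row i (row_mx B B').
have fC : finpres (Q u) := finpresQ u (finpres_row R (k + l)).
pose wC : 'cV[Q u]_k := \col_j mkQ u 'e_(lshift l j).
pose wC' : 'cV[Q u]_l := \col_j mkQ u 'e_(rshift k j).
have hpp : pp_set B B' wC.
  exists wC'; apply/matrixP => i j; rewrite (ord1 j) !mxE.
  have -> : \sum_j0 B i j0 *: wC j0 0 + \sum_j0 B' i j0 *: wC' j0 0 =
            mkQ u (u i).
    rewrite /u row_rowmx linearD !linear_sum /=.
    by congr (_ + _); apply: eq_bigr => j0 _; rewrite mxE linearZ.
  by apply/mkQ0; exists 'e_i; rewrite -/(sumv _ _) sumv_delta.
have [h hh] := Hsurj _ fC wC hpp.
have hw : forall j, h (w j) = mkQ u 'e_(lshift l j).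
  move=> j; move: hh; rewrite nat0 // => /matrixP /(_ j 0); by rewrite !mxE.
have : mkQ u (row_mx v 0) = 0.
  transitivity (h (sumv w v)); last by rewrite gv linear0.
  rewrite row_mx_v0 /sumv !linear_sum.
  by apply: eq_bigr => j _; rewrite !linearZ /= hw.
move/mkQ0 => [e he].
move: he; rewrite -mulmx_sum_row mul_mx_row => /eq_row_mx [h1 h2].
by exists e; split.
Qed.
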